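(* In the setting of the context, let $(\sigma_t,\sigma'_t)_{t\ge0}$ be the monotone coupling started at $(\sigma,\sigma')$. Then for all $t\ge0$, \[ \mathbb E\sum_{i=1}^ma_i\,\mathrm{dist}(\sigma_t^{(i)},\sigma_t'^{(i)})\le\rho_n^t\sum_{i=1}^ma_i\,\mathrm{dist}(\sigma^{(i)},\sigma'^{(i)}), \] and, for each $1\le i\le m$, $\mathbb E\,\mathrm{dist}(\sigma_t^{(i)},\sigma_t'^{(i)})\le n\sqrt{p_i}\,\rho_n^t$.
   Context: Fix $m\ge1$, proportions $p_1,\dots,p_m>0$ with $\sum_ip_i=1$, a symmetric matrix $\mathbf K=(k_{ij})$ with all $k_{ij}>0$, and $\beta\ge0$; $n$ is a positive integer with $np_i\in\mathbb N$. The vertex set $V=\{1,\dots,n\}$ is partitioned into blocks $G_1,\dots,G_m$ with $|G_i|=np_i$; for $v\in G_i,w\in G_j$ put $K(v,w)=k_{ij}/n$. For $\sigma\in\Omega=\{-1,+1\}^V$ let $S^v(\sigma)=\sum_{w\ne v}K(v,w)\sigma(w)$ and $r_+(s)=\frac{1+\tanh(\beta s)}2$. The monotone coupling is the grand coupling of Glauber dynamics in which at each step a vertex $I$ uniform on $V$ and an independent $U$ uniform on $[0,1]$ are drawn (shared by all chains), and each chain in state $\sigma$ sets the spin at $I$ to $+1$ if $U\le r_+(S^I(\sigma))$ and to $-1$ otherwise. $\mathrm{dist}(\sigma^{(i)},\sigma'^{(i)})$ is the number of vertices of $G_i$ at which $\sigma,\sigma'$ differ. Let $\mathbf B=(p_ik_{ij})$,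 $\mathbf Q_n=(1-\frac1n)\mathbf I_m+\frac\beta n\mathbf B$, $\rho_n$ its largest (Perron) eigenvalue and $\mathbf a=(a_1,\dots,a_m)^\top>0$ its left Perron eigenvector normalized by $\|\mathbf a\|_1=1$. *)

(* Defs.v *)
From HB Require Import structures.
From mathcomp Require Import all_boot all_order all_algebra.
From mathcomp Require Import all_classical all_reals all_analysis.
Set Implicit Arguments. Unset Strict Implicit. Unset Printing Implicit Defensive.
Import Order.TTheory GRing.Theory Num.Theory.
Import numFieldNormedType.Exports.
Local Open Scope classical_set_scope.
Local Open Scope ring_scope.

Section Glauber.
Variables (R : realType) (m n : nat).
(* blk v = index i of the block G_i containing vertex v *)
Variable blk : 'I_n -> 'I_m.
Variable k : 'M[R]_m.
Variable beta : R.

Definition config := {ffun 'I_n -> bool}.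
Definition spin (b : bool) : R := if b then 1 else -1.

Definition tanhR (x : R) : R := (expR x - expR (- x)) / (expR x + expR (- x)).
Definition rplus (s : R) : R := (1 + tanhR (beta * s)) / 2.

Definition Kvw (v w : 'I_n) : R := k (blk v) (blk w) / n%:R.

Definition Sfield (v : 'I_n) (sg : config) : R :=
  \sum_(w < n | w != v) Kvw v w * spin (sg w).

Definition upd (sg : config) (v : 'I_n) (u : R) : config :=
  [ffun w => if w == v then (u <= rplus (Sfield v sg)) else sg w].

(* E_(sg,sg') f(sg_t, sg'_t) for the monotone coupling: at each step a
   uniform vertex I and an independent uniform U on [0,1], shared by both
   chains (Markov backward recursion). *)
Fixpoint Ecoup (t : nat) (f : config * config -> R) (x : config * config) : R :=
  match t with
  | 0 => f x
  | t'.+1 => n%:R^-1 * \sum_(v < n)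
       (\int[@lebesgue_measure R]_(u in `[0, 1]) Ecoup t' f (upd x.1 v u, upd x.2 v u))
  end.

Definition dist (i : 'I_m) (sg sg' : config) : R :=
  #|[set v : 'I_n | (blk v == i) && (sg v != sg' v)]|%:R.

Variable p : 'I_m -> R.
Definition Bmx : 'M[R]_m := \matrix_(i, j) (p i * k i j).
Definition Qmx : 'M[R]_m := (1 - n%:R^-1) *: 1%:M + (beta / n%:R) *: Bmx.

End Glauber.
Arguments dist {R m n} blk i sg sg'.

(* Main.v *)
Require Import Defs.
From HB Require Import structures.
From mathcomp Require Import all_boot all_order all_algebra.
From mathcomp Require Import all_classical all_reals all_analysis.
From mathcomp Require Import measurable_realfun.
From mathcomp.algebra_tactics Require Import ring lra.
Import Order.TTheory GRing.Theory Num.Theory.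
Local Open Scope ring_scope.

Section Tanh.
Variable R : realType.

Let F (x : R) := 1 - 2 * (expR x * expR x + 1)^-1.

Lemma tanhE (x : R) : tanhR x = F x.
Proof.
rewrite /tanhR /F expRN.
have h := expR_gt0 x.
field; apply/andP; split; rewrite ?lt0r_neq0 //; nra.
Qed.

Let dF (x : R) := 4 * (expR x * expR x) / (expR x * expR x + 1) ^+ 2.

Lemma dF_01 x : 0 <= dF x <= 1.
Proof.
rewrite /dF; have h := expR_gt0 x.
set e := expR x * expR x.
have he : 0 < e by rewrite mulr_gt0.
have hp : 0 < (e + 1) ^+ 2 by rewrite exprn_gt0 // ; lra.
apply/andP; split.
  by rewrite divr_ge0 //; [lra | exact: ltW].
rewrite ler_pdivrMr // mul1r -subr_ge0.
have -> : (e + 1) ^+ 2 - 4 * e = (e - 1) ^+ 2 by ring.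
exact: sqr_ge0.
Qed.

Lemma isdF (x : R) : is_derive x (1:R) F (dF x).
Proof.
have h := expR_gt0 x.
have g0 : expR x * expR x + 1 != 0 by rewrite lt0r_neq0 //; nra.
rewrite /F.
apply: trigger_derive.
rewrite /dF /=.
have E : forall a b : R, a *: b = a * b by [].
rewrite !E.
by field.
Qed.

Lemma tanh_lip_le (x y : R) : y <= x -> 0 <= tanhR x - tanhR y <= x - y.
Proof.
move=> yx; rewrite !tanhE.
have dv : forall z, derivable F z 1 by move=> z; case: (isdF z).
have [c _ ->] := @MVT_segment R F dF y x yx (fun z _ => isdF z)
  (@derivable_within_continuous R R F `[y, x] (fun z _ => dv z)).
have /andP[d0 d1] := dF_01 c.
have xy0 : 0 <= x - y by lra.
apply/andP; split; first exact: mulr_ge0.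
by rewrite -[leRHS]mul1r ler_wpM2r.
Qed.

Lemma tanh_lip (x y : R) : `|tanhR x - tanhR y| <= `|x - y|.
Proof.
have [yx|xy] := leP y x.
  have /andP[h1 h2] := tanh_lip_le _ _ yx.
  by rewrite !ger0_norm //; lra.
have /andP[h1 h2] := tanh_lip_le _ _ (ltW xy).
rewrite -normrN opprB -(normrN (x - y)) opprB !ger0_norm //; lra.
Qed.
End Tanh.

Section CS.
Variable R : rcfType.
Variable m : nat.

Lemma CSw (q a w : 'I_m -> R) : (forall i, 0 <= q i) -> (forall i, 0 < a i) ->
  (\sum_i q i * w i) ^+ 2 <= (\sum_i q i * a i) * (\sum_i q i * w i ^+ 2 / a i).
Proof.
move=> q0 a0.
set A := \sum_i q i * a i; set B := \sum_i q i * w i; set C := \sum_i q i * w i ^+ 2 / a i.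
have A0 : 0 <= A by apply: sumr_ge0 => i _; apply: mulr_ge0; [exact: q0 | exact: ltW].
have C0 : 0 <= C.
  by apply: sumr_ge0 => i _; apply: divr_ge0; [apply: mulr_ge0; [exact: q0 | exact: sqr_ge0] | exact: ltW].
case: (eqVneq A 0) => [Az|Anz].
  have qz : forall i, q i = 0.
    move=> i; have /psumr_eq0P H := Az.
    have /eqP := H (fun j _ => mulr_ge0 (q0 j) (ltW (a0 j))) i isT.
    by rewrite mulf_eq0 (gt_eqF (a0 i)) orbF => /eqP.
  have -> : B = 0 by rewrite /B big1 // => i _; rewrite qz mul0r.
  by rewrite expr0n /= mulr_ge0.
have Ap : 0 < A by rewrite lt_def Anz A0.
set t := B / A.
have H : 0 <= \sum_i q i * a i * (w i / a i - t) ^+ 2.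
  by apply: sumr_ge0 => i _; apply: mulr_ge0; [apply: mulr_ge0; [exact: q0|exact: ltW] | exact: sqr_ge0].
have E : \sum_i q i * a i * (w i / a i - t) ^+ 2 = C - 2 * t * B + t ^+ 2 * A.
  rewrite (eq_bigr (fun i => q i * w i ^+ 2 / a i - 2 * t * (q i * w i) + t ^+ 2 * (q i * a i))).
    by rewrite big_split sumrB /= -!mulr_sumr.
  move=> i _; have := a0 i; move=> ai; field; exact: lt0r_neq0.
rewrite E /t in H.
have E2 : C - 2 * (B / A) * B + (B / A) ^+ 2 * A = (A * C - B ^+ 2) / A by field.
rewrite E2 in H.
have := mulr_ge0 H (ltW Ap); rewrite divfK //; lra.
Qed.

Variables (Q : 'I_m -> 'I_m -> R) (p a : 'I_m -> R) (rho : R).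
Hypothesis Q0 : forall i j, 0 <= Q i j.
Hypothesis p0 : forall i, 0 < p i.
Hypothesis a0 : forall i, 0 < a i.
Hypothesis aQ : forall j, \sum_i a i * Q i j = rho * a j.
Hypothesis Qpa : forall i, \sum_j Q i j * (p j * a j) = rho * (p i * a i).

Definition cQ (c : 'I_m -> R) : 'I_m -> R := fun j => \sum_i c i * Q i j.
Definition MM (w : 'I_m -> R) : R := \sum_j p j * w j ^+ 2.

Lemma MM_step w : MM (cQ w) <= rho ^+ 2 * MM w.
Proof.
rewrite /MM /cQ.
apply: (@le_trans _ _ (\sum_j p j * ((\sum_i Q i j * a i) * (\sum_i Q i j * w i ^+ 2 / a i)))).
  apply: ler_sum => j _; apply: ler_wpM2l; first exact: ltW.
  rewrite (eq_bigr (fun i => Q i j * w i)); last by move=> i _; rewrite mulrC.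
  exact: CSw.
rewrite le_eqVlt; apply/orP; left; apply/eqP.
have aQ' : forall j, \sum_i Q i j * a i = rho * a j.
  by move=> j; rewrite -aQ; apply: eq_bigr => i _; rewrite mulrC.
under eq_bigr => j _ do rewrite aQ'.
under eq_bigr => j _ do rewrite mulr_sumr.
under eq_bigr => j _ do rewrite mulr_sumr.
rewrite exchange_big /= mulr_sumr; apply: eq_bigr => i _.
transitivity (rho * w i ^+ 2 / a i * \sum_j Q i j * (p j * a j)).
  rewrite mulr_sumr; apply: eq_bigr => j _.
  have := a0 i => ai; field; exact: lt0r_neq0.
rewrite Qpa; have := a0 i => ai; field; exact: lt0r_neq0.
Qed.

Lemma cQ_ge0 c : (forall i, 0 <= c i) -> forall j, 0 <= cQ c j.
Proof. by move=> c0 j; apply: sumr_ge0 => i _; rewrite mulr_ge0. Qed.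

Lemma iter_ge0 t c : (forall i, 0 <= c i) -> forall j, 0 <= iter t cQ c j.
Proof. by elim: t => [//|t IH] c0 /=; apply: cQ_ge0; exact: IH. Qed.

Lemma MM_iter t w : MM (iter t cQ w) <= rho ^+ (2 * t) * MM w.
Proof.
elim: t => [|t IH]; first by rewrite muln0 expr0 mul1r.
rewrite /= (le_trans (MM_step _)) // mulnS exprD -mulrA ler_wpM2l //.
by rewrite exprn_even_ge0.
Qed.

Hypothesis psum : \sum_i p i = 1.
Hypothesis rho0 : 0 <= rho.

Lemma final_bound t i :
  \sum_j iter t cQ (fun j => (j == i)%:R) j * p j <= Num.sqrt (p i) * rho ^+ t.
Proof.
set w := iter t cQ _.
have w0 : forall j, 0 <= w j by apply: iter_ge0 => j; rewrite ler0n.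
set S := \sum_j w j * p j.
have S0 : 0 <= S by apply: sumr_ge0 => j _; rewrite mulr_ge0 // ltW.
have H1 : S ^+ 2 <= MM w.
  have CS := @CSw p (fun _ => 1) w (fun j => ltW (p0 j)) (fun _ => ltr01).
  have e1 : \sum_j p j * 1 = 1 by rewrite -[RHS]psum; apply: eq_bigr => j _; rewrite mulr1.
  have e2 : \sum_j p j * w j ^+ 2 / 1 = MM w by apply: eq_bigr => j _; rewrite divr1.
  have e3 : \sum_j p j * w j = S by apply: eq_bigr => j _; rewrite mulrC.
  by rewrite e1 e2 e3 mul1r in CS.
have H2 : MM (fun j => (j == i)%:R) = p i.
  rewrite /MM (bigD1 i) //= eqxx expr1n mulr1 big1 ?addr0 // => j ji.
  by rewrite (negbTE ji) expr0n mulr0.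
have H3 := MM_iter t (fun j => (j == i)%:R); rewrite H2 in H3.
have T0 : 0 <= Num.sqrt (p i) * rho ^+ t by rewrite mulr_ge0 ?sqrtr_ge0 ?exprn_ge0.
have T2 : (Num.sqrt (p i) * rho ^+ t) ^+ 2 = rho ^+ (2 * t) * p i.
  by rewrite exprMn sqr_sqrtr ?(ltW (p0 i)) // -exprM mulnC mulrC.
have : S ^+ 2 <= (Num.sqrt (p i) * rho ^+ t) ^+ 2 by rewrite T2; exact: le_trans H1 H3.
move: T0 S0; set T := Num.sqrt _ * _ => T0 S0 h.
nra.
Qed.
End CS.

Section Int.
Local Open Scope classical_set_scope.
Local Open Scope ring_scope.
Variable R : realType.
Notation mu := (@lebesgue_measure R).

Lemma mI01 : measurable (`[0, 1] : set R).
Proof. exact: measurable_itv. Qed.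

Lemma muI01 : mu `[0, 1] = 1%:E.
Proof. by rewrite lebesgue_measure_itv /= lte_fin ltr01 oppr0 adde0. Qed.

Lemma int_bb (G : bool -> bool -> R) (c1 c2 : R) :
  mu.-integrable `[0, 1] (EFin \o (fun u => G (u <= c1) (u <= c2))).
Proof.
apply: measurable_bounded_integrable.
- exact: mI01.
- by rewrite [X in (X < _)%E]muI01 ltry.
- apply: measurable_funS (measurableT) _ _ => //.
  have -> : (fun u => G (u <= c1) (u <= c2)) = (fun u => if u <= c1 then
     (if u <= c2 then G true true else G true false) else
     (if u <= c2 then G false true else G false false)).
    by apply/funext => u; case: (u <= c1); case: (u <= c2).
  have m1 : measurable_fun [set: R] (fun u : R => u <= c1).
    by apply: measurable_fun_ler => //; exact: measurable_cst.
  have m2 : measurable_fun [set: R] (fun u : R => u <= c2).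
    by apply: measurable_fun_ler => //; exact: measurable_cst.
  by apply: measurable_fun_ifT => //; apply: measurable_fun_ifT.
- rewrite /bounded_near; near=> M => u _ /=.
  apply: (@le_trans _ _ (`|G true true| + `|G true false| + `|G false true| + `|G false false|)).
    have := normr_ge0 (G true true); have := normr_ge0 (G true false).
    have := normr_ge0 (G false true); have := normr_ge0 (G false false).
    case: (u <= c1); case: (u <= c2) => /=; lra.
  by near: M; exact: nbhs_pinfty_ge.
Unshelve. all: end_near. Qed.

Lemma memoc (u c1 c2 : R) : (u \in `]c1, c2]%classic) = (c1 < u <= c2).
Proof. by apply/idP/idP; rewrite inE /= in_itv. Qed.

Lemma Rint_xor (c1 c2 : R) :
  \int[mu]_(u in `[0, 1]) ((u <= c1) != (u <= c2))%:R <= `|c1 - c2|.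
Proof.
wlog c12 : c1 c2 / c1 <= c2.
  move=> H; have [h|h] := leP c1 c2; first exact: H.
  rewrite distrC.
  under eq_Rintegral do rewrite eq_sym.
  by apply: H; exact: ltW.
have -> : (fun u => ((u <= c1) != (u <= c2))%:R) = (\1_(`]c1, c2] : set R) : R -> R).
  apply/funext => u; rewrite indicE memoc.
  case: (leP u c1) => h1 /=; case: (leP u c2) => h2 //=; lra.
rewrite /Rintegral (@integral_indic _ _ R mu); [|exact: measurable_itv..].
have h1 : (mu (`]c1, c2] `&` `[0%R, 1%R]) <= (c2 - c1)%:E)%E.
  apply: (@le_trans _ _ (mu `]c1, c2])).
    by apply: le_measure; rewrite ?inE; [apply: measurableI; exact: measurable_itv
      | exact: measurable_itv | exact: subIsetl].
  rewrite lebesgue_measure_itv /=.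
  case: ltP => // _; by rewrite lee_fin subr_ge0.
have h0 : (0 <= mu (`]c1, c2] `&` `[0%R, 1%R]))%E by exact: measure_ge0.
rewrite distrC ger0_norm ?subr_ge0 //.
rewrite -lee_fin fineK.
  exact: h1.
rewrite ge0_fin_numE; first exact: (le_lt_trans h1 (ltry _)).
exact: h0.
Qed.
End Int.

Section Main.
Local Open Scope classical_set_scope.
Local Open Scope ring_scope.
Variables (R : realType) (m n : nat) (blk : 'I_n -> 'I_m) (k : 'M[R]_m) (beta : R).
Notation mu := (@lebesgue_measure R).
Notation cfg := (config n).

Definition updb (sg : cfg) (v : 'I_n) (b : bool) : cfg :=
  [ffun w => if w == v then b else sg w].

Definition step (g : cfg * cfg -> R) (x : cfg * cfg) : R :=
  n%:R^-1 * \sum_(v < n) \int[mu]_(u in `[0, 1])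
     g (upd blk k beta x.1 v u, upd blk k beta x.2 v u).

Lemma EcoupS t f x : Ecoup blk k beta t.+1 f x = step (Ecoup blk k beta t f) x.
Proof. by []. Qed.

Lemma int_g (g : cfg * cfg -> R) x v : mu.-integrable `[0, 1]
  (EFin \o (fun u => g (upd blk k beta x.1 v u, upd blk k beta x.2 v u))).
Proof.
exact: (@int_bb R (fun b1 b2 => g (updb x.1 v b1, updb x.2 v b2))
  (rplus beta (Sfield blk k v x.1)) (rplus beta (Sfield blk k v x.2))).
Qed.

Lemma step_mono g h x : (forall y, g y <= h y) -> step g x <= step h x.
Proof.
move=> gh; rewrite /step ler_wpM2l ?invr_ge0 ?ler0n //; apply: ler_sum => v _.
apply: le_Rintegral.
- exact: measurable_itv.
- exact: int_g.
- exact: int_g.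
- by move=> u _; exact: gh.
Qed.

Lemma Rint_lin x v (I : Type) (r : seq I) (c : I -> R) (g : I -> cfg * cfg -> R) :
  \int[mu]_(u in `[0, 1]) (\sum_(i <- r) c i * g i (upd blk k beta x.1 v u, upd blk k beta x.2 v u))
  = \sum_(i <- r) c i * \int[mu]_(u in `[0, 1]) g i (upd blk k beta x.1 v u, upd blk k beta x.2 v u).
Proof.
elim: r => [|i r IH].
  under eq_Rintegral do rewrite big_nil.
  by rewrite big_nil Rintegral_cst ?mul0r //; exact: measurable_itv.
under eq_Rintegral do rewrite big_cons.
rewrite big_cons RintegralD; first rewrite IH RintegralZl //.
all: first [exact: measurable_itv | exact: int_g |
  exact: (int_g (fun y => c i * g i y)) |
  exact: (int_g (fun y => \sum_(j <- r) c j * g j y))].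
Qed.

Lemma step_lin x (I : Type) (r : seq I) (c : I -> R) (g : I -> cfg * cfg -> R) :
  step (fun y => \sum_(i <- r) c i * g i y) x = \sum_(i <- r) c i * step (g i) x.
Proof.
rewrite /step /=.
under eq_bigr do rewrite Rint_lin.
rewrite exchange_big /= mulr_sumr; apply: eq_bigr => i _.
by rewrite -mulr_sumr mulrCA.
Qed.


Lemma cl_card (b : pred 'I_n) : #|[set v | b v]| = #|[set v | b v]%SET|.
Proof. apply: eq_card => v; rewrite [RHS]inE; apply/idP/idP; rewrite inE //. Qed.

Lemma card_split (P P' : pred 'I_n) v :
  (forall w, w != v -> P w = P' w) ->
  #|[set w | P w]%SET|%:R = #|[set w | P' w]%SET|%:R - (P' v)%:R + (P v)%:R :> R.
Proof.
move=> PP.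
rewrite (cardsD1 v [set w | P w]%SET) (cardsD1 v [set w | P' w]%SET).
have -> : ([set w | P w] :\ v = [set w | P' w] :\ v)%SET.
  by apply/setP => w; rewrite !inE; case: eqP => //= /eqP /PP.
rewrite !inE !natrD; ring.
Qed.

Lemma dist_updb i s1 s2 v b1 b2 :
  dist blk i (updb s1 v b1) (updb s2 v b2) = dist (R:=R) blk i s1 s2
  - ((blk v == i) && (s1 v != s2 v))%:R + ((blk v == i) && (b1 != b2))%:R.
Proof.
rewrite /dist !cl_card (card_split _ (fun w => (blk w == i) && (s1 w != s2 w)) v) /=.
  by rewrite /= !ffunE eqxx.
by move=> w wv; rewrite !ffunE (negbTE wv).
Qed.

Lemma sum_count (P Q : pred 'I_n) :
  \sum_(w | P w) (Q w)%:R = #|[set w | P w && Q w]%SET|%:R :> R.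
Proof.
transitivity (\sum_(w | P w && Q w) (1 : R)).
  by rewrite big_mkcondr /=; apply: eq_bigr => w _; case: (Q w).
rewrite (eq_bigl (fun w => w \in [set w | P w && Q w]%SET)); last by move=> w; rewrite inE.
by rewrite sumr_const.
Qed.

Lemma sum_count1 (Q : pred 'I_n) :
  \sum_w (Q w)%:R = #|[set w | Q w]%SET|%:R :> R.
Proof. by rewrite (sum_count predT). Qed.


Lemma rplus_lip s1 s2 : 0 <= beta ->
  `|rplus beta s1 - rplus beta s2| <= beta / 2 * `|s1 - s2|.
Proof.
move=> b0; rewrite /rplus.
have h := @tanh_lip R (beta * s1) (beta * s2).
rewrite -mulrBr normrM ger0_norm // in h.
have -> : (1 + tanhR (beta * s1)) / 2 - (1 + tanhR (beta * s2)) / 2 =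
  (tanhR (beta * s1) - tanhR (beta * s2)) / 2 by field.
rewrite normrM (ger0_norm (_ : 0 <= 2^-1)) ?invr_ge0 ?ler0n //.
lra.
Qed.

Hypothesis k0 : forall i j, 0 <= k i j.

Lemma Kvw_ge0 v w : 0 <= Kvw blk k v w.
Proof. by rewrite /Kvw divr_ge0. Qed.

Lemma Sfield_bound v s1 s2 :
  `|Sfield blk k v s1 - Sfield blk k v s2| <=
    2 / n%:R * \sum_j k (blk v) j * dist blk j s1 s2.
Proof.
rewrite /Sfield -sumrB.
apply: le_trans (ler_norm_sum _ _ _) _.
apply: (@le_trans _ _ (\sum_w (Kvw blk k v w * (2 * (s1 w != s2 w)%:R)))).
  rewrite big_mkcond /=; apply: ler_sum => w _.
  have hK := Kvw_ge0 v w.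
  have hB : 0 <= Kvw blk k v w * (2 * (s1 w != s2 w)%:R).
    by rewrite mulr_ge0 // mulr_ge0.
  case: (w != v) => //.
  rewrite -mulrBr normrM ger0_norm //; apply: ler_wpM2l => //.
  by rewrite /spin; case: (s1 w); case: (s2 w) => /=; rewrite ?normr0 ?mulr0 ?mulr1 //;
    rewrite ?opprK -?opprD ?normrN ger0_norm //; lra.
rewrite (partition_big blk predT) //= mulr_sumr; rewrite le_eqVlt; apply/orP; left; apply/eqP.
apply: eq_bigr => j _.
rewrite (eq_bigr (fun w => (k (blk v) j / n%:R * 2) * (s1 w != s2 w)%:R)); last first.
  by move=> w /eqP <-; rewrite /Kvw; ring.
rewrite -mulr_sumr sum_count /dist cl_card.
ring.
Qed.


Variable p : 'I_m -> R.
Hypothesis hn : (0 < n)%N.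
Hypothesis b0 : 0 <= beta.
Hypothesis hcard : forall i, #|[set v | blk v == i]%SET|%:R = n%:R * p i.

Lemma dist_upd i x v u : dist blk i (upd blk k beta x.1 v u) (upd blk k beta x.2 v u) =
  dist (R:=R) blk i x.1 x.2 - ((blk v == i) && (x.1 v != x.2 v))%:R
  + ((blk v == i) && ((u <= rplus beta (Sfield blk k v x.1)) != (u <= rplus beta (Sfield blk k v x.2))))%:R.
Proof. exact: dist_updb. Qed.

Lemma Rint_step i x v :
  \int[mu]_(u in `[0, 1]) dist blk i (upd blk k beta x.1 v u) (upd blk k beta x.2 v u)
  <= dist (R:=R) blk i x.1 x.2 - ((blk v == i) && (x.1 v != x.2 v))%:R
     + (blk v == i)%:R * (beta / n%:R * \sum_j k i j * dist blk j x.1 x.2).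
Proof.
under eq_Rintegral do rewrite dist_upd.
set c1 := rplus beta (Sfield blk k v x.1).
set c2 := rplus beta (Sfield blk k v x.2).
set d0 := dist blk i x.1 x.2 - _.
rewrite RintegralD; first last.
- exact: (@int_bb R (fun b1 b2 => ((blk v == i) && (b1 != b2))%:R) c1 c2).
- exact: (@int_bb R (fun b1 b2 => d0) c1 c2).
- exact: measurable_itv.
rewrite Rintegral_cst; last exact: measurable_itv.
rewrite [X in fine X]muI01 /= mulr1 lerD2l.
case: eqP => [bi|_]; last first.
  by rewrite mul0r; under eq_Rintegral do rewrite /=; rewrite Rintegral_cst ?mul0r //; exact: measurable_itv.
rewrite mul1r /=.
apply: le_trans (@Rint_xor R c1 c2) _.
apply: le_trans (rplus_lip _ _ b0) _.
apply: le_trans (ler_wpM2l _ (Sfield_bound v x.1 x.2)) _.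
  by rewrite divr_ge0.
rewrite bi le_eqVlt; apply/orP; left; apply/eqP; field.
by rewrite pnatr_eq0 -lt0n.
Qed.


Lemma distE i (s s' : cfg) :
  dist (R:=R) blk i s s' = #|[set w | (blk w == i) && (s w != s' w)]%SET|%:R.
Proof. by rewrite /dist cl_card. Qed.

Lemma QE i j : Qmx n k beta p i j =
  (1 - n%:R^-1) * (i == j)%:R + beta / n%:R * (p i * k i j).
Proof. by rewrite /Qmx /Bmx !mxE. Qed.

Lemma step_dist_le i x :
  step (fun y => dist blk i y.1 y.2) x <=
  \sum_j Qmx n k beta p i j * dist blk j x.1 x.2.
Proof.
set X := beta / n%:R * \sum_j k i j * dist blk j x.1 x.2.
rewrite /step.
apply: (@le_trans _ _ (n%:R^-1 * \sum_(v < n) (dist blk i x.1 x.2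
   - ((blk v == i) && (x.1 v != x.2 v))%:R + (blk v == i)%:R * X))).
  rewrite ler_wpM2l ?invr_ge0 ?ler0n //; apply: ler_sum => v _; exact: Rint_step.
rewrite big_split /= sumrB sumr_const card_ord -mulr_suml !sum_count1 hcard -distE.
under eq_bigr do rewrite QE mulrDl.
rewrite big_split /= (bigD1 i) //= big1 ?addr0; last first.
  by move=> j /negbTE ji; rewrite eq_sym ji mulr0 mul0r.
rewrite eqxx mulr1 /X.
under [X in _ <= _ + X]eq_bigr do rewrite -!mulrA.
rewrite -mulr_sumr -mulr_sumr.
rewrite le_eqVlt; apply/orP; left; apply/eqP.
have nz : n%:R != 0 :> R by rewrite pnatr_eq0 -lt0n.
rewrite -mulr_sumr -mulr_natr.
by field.
Qed.


Hypothesis Q0 : forall i j, 0 <= Qmx n k beta p i j.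
Notation Qf := (fun i j => Qmx n k beta p i j).

Lemma Ecoup_bound t : forall c, (forall i, 0 <= c i) -> forall x,
  Ecoup blk k beta t (fun y => \sum_i c i * dist blk i y.1 y.2) x <=
  \sum_i iter t (cQ R m Qf) c i * dist blk i x.1 x.2.
Proof.
elim: t => [|t IH] c c0 x; first by [].
rewrite EcoupS; apply: le_trans (step_mono _ _ x (IH c c0)) _.
rewrite step_lin.
have w0 := @iter_ge0 R m Qf Q0 t c c0.
apply: (@le_trans _ _ (\sum_i iter t (cQ R m Qf) c i * \sum_j Qf i j * dist blk j x.1 x.2)).
  by apply: ler_sum => i _; apply: ler_wpM2l => //; exact: step_dist_le.
rewrite le_eqVlt; apply/orP; left; apply/eqP.
under eq_bigr do rewrite mulr_sumr.
rewrite exchange_big /=; apply: eq_bigr => j _.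
by rewrite /= /cQ mulr_suml; apply: eq_bigr => i _; rewrite mulrA.
Qed.

End Main.

Theorem lemma4p5 (R : realType) (m n : nat) (p : 'I_m -> R) (k : 'M[R]_m)
  (beta : R) (blk : 'I_n -> 'I_m) (rho : R) (a : 'rV[R]_m) :
  (0 < m)%N -> (0 < n)%N ->
  (forall i, 0 < p i) -> \sum_i p i = 1 ->
  k^T = k -> (forall i j, 0 < k i j) -> 0 <= beta ->
  (forall i, #|[set v | blk v == i]|%:R = n%:R * p i) ->
  (* rho_n : the largest eigenvalue of Q_n *)
  eigenvalue (Qmx n k beta p) rho ->
  (forall lam, eigenvalue (Qmx n k beta p) lam -> lam <= rho) ->
  (* a : positive left eigenvector for rho, with ||a||_1 = 1 *)
  a *m Qmx n k beta p = rho *: a ->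
  (forall i, 0 < a 0 i) -> \sum_i a 0 i = 1 ->
  forall (sg sg' : config n) (t : nat),
    Ecoup blk k beta t
      (fun x => \sum_i a 0 i * dist blk i x.1 x.2) (sg, sg')
      <= rho ^+ t * \sum_i a 0 i * dist blk i sg sg'
    /\ (forall i, Ecoup blk k beta t (fun x => dist blk i x.1 x.2) (sg, sg')
                  <= n%:R * Num.sqrt (p i) * rho ^+ t).
Proof.
move=> hm hn hp hpsum hk hk0 hb hcard _ _ haQ ha0 hasum sg sg' t.
have k0 : forall i j, 0 <= k i j by move=> i j; exact: ltW.
have nz : n%:R != 0 :> R by rewrite pnatr_eq0 -lt0n.
have ksym : forall i j, k j i = k i j.
  by move=> i j; rewrite -[in LHS]hk mxE.
have n1 : 0 <= 1 - n%:R^-1 :> R.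
  have -> : 1 - n%:R^-1 = (n%:R - 1) / n%:R :> R by field.
  by rewrite divr_ge0 ?ler0n // subr_ge0 ler1n.
have Q0 : forall i j, 0 <= Qmx n k beta p i j.
  move=> i j; rewrite QE; apply: addr_ge0; first by apply: mulr_ge0 => //; exact: ler0n.
  apply: mulr_ge0; [apply: divr_ge0 => //; exact: ler0n | apply: mulr_ge0; [exact: ltW | exact: k0]].
have aQ : forall j, \sum_i a 0 i * Qmx n k beta p i j = rho * a 0 j.
  by move=> j; have := congr1 (fun M : 'M[R]_(1, m) => M 0 j) haQ; rewrite !mxE.
have Qpa : forall i, \sum_j Qmx n k beta p i j * (p j * a 0 j) = rho * (p i * a 0 i).
  move=> i; rewrite mulrCA -aQ mulr_sumr; apply: eq_bigr => j _.
  rewrite !QE ksym; case: (eqVneq i j) => [->|ne]; first by ring.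
  rewrite mulr0 !add0r; ring.
have rho0 : 0 <= rho.
  have s0 : 0 <= \sum_i a 0 i * Qmx n k beta p i (Ordinal hm).
    by apply: sumr_ge0 => i _; apply: mulr_ge0 => //; exact: ltW.
  by rewrite aQ pmulr_lge0 in s0.
split.
  have := @Ecoup_bound R m n blk k beta k0 p hn hb hcard Q0 t _ (fun i => ltW (ha0 i)) (sg, sg').
  move=> /le_trans; apply; rewrite le_eqVlt; apply/orP; left; apply/eqP.
  rewrite mulr_sumr; apply: eq_bigr => i _; rewrite mulrA; congr (_ * _).
  move: i; elim: t => [|t IH] i; first by rewrite expr0 mul1r.
  rewrite [LHS]/= /cQ (eq_bigr (fun j => rho ^+ t * (a 0 j * Qmx n k beta p j i))); last first.
    by move=> j _; rewrite IH mulrA.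
  by rewrite -mulr_sumr aQ exprSr mulrA.
move=> i.
have -> : (fun x : config n * config n => dist blk i x.1 x.2) =
    (fun y : config n * config n => \sum_j (fun j => (j == i)%:R : R) j * dist blk j y.1 y.2).
  apply: boolp.funext => y /=; rewrite (bigD1 i) //= eqxx mul1r big1 ?addr0 //.
  by move=> j /negbTE ->; rewrite mul0r.
have c0 : forall j, 0 <= (fun j => (j == i)%:R : R) j by move=> j; exact: ler0n.
apply: le_trans (@Ecoup_bound R m n blk k beta k0 p hn hb hcard Q0 t _ c0 (sg, sg')) _.
set w := iter t _ _.
have w0 : forall j, 0 <= w j := @iter_ge0 R m (fun i j => Qmx n k beta p i j) Q0 t _ c0.
apply: (@le_trans _ _ (\sum_j w j * (n%:R * p j))).
  apply: ler_sum => j _; apply: ler_wpM2l => //.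
  rewrite distE -hcard ler_nat; apply: subset_leq_card; apply/fintype.subsetP => v.
  by rewrite !inE => /andP[].
rewrite (eq_bigr (fun j => n%:R * (w j * p j))); last by move=> j _; ring.
rewrite -mulr_sumr -mulrA ler_wpM2l ?ler0n //.
exact: (@final_bound R m (fun i j => Qmx n k beta p i j) p (fun j => a 0 j) rho Q0 hp ha0 aQ Qpa hpsum rho0 t i).
Qed.
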